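(* Every finitely generated countable profinite completely regular semigroup is finite.
   Context: A profinite semigroup is a compact (Hausdorff) topological semigroup that is residually finite, i.e. any two distinct elements are separated by a continuous homomorphism onto a finite discrete semigroup. It is finitely generated if some finite subset generates a dense subsemigroup. A semigroup is completely regular if each of its elements lies in a subgroup. *)

(* Defs.v *)
From mathcomp Require Import all_boot all_order.
From mathcomp Require Import all_classical all_reals all_analysis.
Set Implicit Arguments. Unset Strict Implicit. Unset Printing Implicit Defensive.
Local Open Scope classical_set_scope.

Section Semigroups.
Variables (S : topologicalType) (mul : S -> S -> S).

Inductive gen_subsemigroup (A : set S) : S -> Prop :=
| gen_base x : A x -> gen_subsemigroup A x
| gen_mul x y : gen_subsemigroup A x -> gen_subsemigroup A y ->
                gen_subsemigroup A (mul x y).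

Definition compact_topological_semigroup : Prop :=
  [/\ associative mul,
      continuous (fun p : S * S => mul p.1 p.2),
      compact [set: S] & hausdorff_space S].

Definition finite_quotient_separating (x y : S) : Prop :=
  exists (F : finType) (op : F -> F -> F) (phi : S -> F),
    [/\ associative op,
        (forall a b, phi (mul a b) = op (phi a) (phi b)),
        (forall t : F, open (phi @^-1` [set t])),  (* continuity into discrete F *)
        (forall t : F, exists a, phi a = t)
      & phi x <> phi y].

Definition residually_finite : Prop :=
  forall x y : S, x <> y -> finite_quotient_separating x y.

Definition profinite_semigroup : Prop :=
  compact_topological_semigroup /\ residually_finite.

Definition finitely_generated : Prop :=
  exists A : set S, finite_set A /\ closure (gen_subsemigroup A) = [set: S].

Definition is_subgroup (G : set S) : Prop :=
  (forall a b, G a -> G b -> G (mul a b)) /\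
  exists e, [/\ G e, (forall g, G g -> mul e g = g /\ mul g e = g)
              & (forall g, G g -> exists h, [/\ G h, mul g h = e & mul h g = e])].

Definition completely_regular : Prop :=
  forall x : S, exists G : set S, is_subgroup G /\ G x.

End Semigroups.

(* Main.v *)
From HB Require Import structures.
Require Import Defs.
From mathcomp Require Import all_boot all_order finmap.
From mathcomp Require Import all_classical all_reals all_analysis.
Local Open Scope classical_set_scope.

Definition pt_of (S : topologicalType) (x : S) : Type := S.
HB.instance Definition _ (S : topologicalType) (x : S) := Topological.copy (pt_of S x) S.
HB.instance Definition _ (S : topologicalType) (x : S) := isPointed.Build (pt_of S x) x.

Set Implicit Arguments. Unset Strict Implicit. Unset Printing Implicit Defensive.

Section Basic.
Variables (S : topologicalType) (mul : S -> S -> S).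
Hypothesis mulA : associative mul.

Definition leJ x y := exists u v, x = mul u (mul y v).
Definition full_set (C : set S) q := forall d, C d -> leJ q d.
Notation gen := (gen_subsemigroup mul).

Lemma gen_left_ind (C : set S) (P : S -> Prop) :
  (forall c, C c -> P c) ->
  (forall s c, gen C s -> P s -> C c -> P (mul s c)) ->
  forall t, gen C t -> P t.
Proof.
move=> Pb Ps t gt.
suff : P t /\ forall s, gen C s -> P s -> P (mul s t) by case.
elim: gt => [c Cc|x y gx [Px Hx] gy [Py Hy]].
  split; first exact: Pb.
  by move=> s gs Ps'; apply: Ps.
split; first exact: Hy.
move=> s gs Ps'; rewrite mulA; apply: Hy; last exact: Hx.
exact: gen_mul.
Qed.

Lemma dec (C U : set S) : (forall x, gen C x -> full_set C x \/ U x) ->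
  forall t, gen C t -> U t \/ exists q, [/\ full_set C q,
     C q \/ (exists2 u, U u & exists2 c, C c & q = mul u c) &
     (t = q \/ exists v, t = mul q v)].
Proof.
move=> hU t gt.
have : gen C t /\ (U t \/ exists q, [/\ full_set C q,
     C q \/ (exists2 u, U u & exists2 c, C c & q = mul u c) &
     (t = q \/ exists v, t = mul q v)]); last by case.
move: t gt; apply: gen_left_ind => [c Cc|s c gs [_ IH] Cc].
  split; first exact: gen_base.
  have [fc|Uc] := hU c (gen_base _ Cc); last by left.
  by right; exists c; split => //; [left|left].
have gsc : gen C (mul s c) by apply: gen_mul => //; exact: gen_base.
split => //.
case: IH => [Us|[q [fq Qq hq]]].
  have [fsc|Usc] := hU _ gsc; last by left.
  right; exists (mul s c); split => //; last by left.
  by right; exists s => //; exists c.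
right; exists q; split => //; right.
case: hq => [->|[v ->]]; first by exists c.
by exists (mul v c); rewrite mulA.
Qed.

End Basic.

Lemma gen_op (S : topologicalType) (mul : S -> S -> S) (C : set S) :
  gen_subsemigroup (fun x y => mul y x) C = gen_subsemigroup mul C.
Proof.
apply/seteqP; split => t; elim => [c Cc|x y _ gx _ gy].
- exact: gen_base.
- exact: gen_mul.
- exact: gen_base.
- exact: gen_mul.
Qed.

Lemma leJ_op (S : topologicalType) (mul : S -> S -> S) : associative mul ->
  forall x y, leJ (fun x y => mul y x) x y <-> leJ mul x y.
Proof.
move=> mulA x y; split => -[u [v ->]]; exists v, u; by rewrite mulA.
Qed.

Lemma full_op (S : topologicalType) (mul : S -> S -> S) : associative mul ->
  forall C x, full_set (fun x y => mul y x) C x <-> full_set mul C x.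
Proof.
by move=> mulA C x; split => h d Cd; apply/(leJ_op mulA); apply: h.
Qed.

Section CR.
Variables (S : topologicalType) (mul : S -> S -> S).
Hypothesis mulA : associative mul.
Variables (e inv : S -> S).
Hypothesis he1 : forall x, mul x (e x) = x.
Hypothesis he2 : forall x, mul (e x) x = x.
Hypothesis hi1 : forall x, mul x (inv x) = e x.
Hypothesis hi2 : forall x, mul (inv x) x = e x.
Local Notation leJ := (leJ mul).
Local Notation full := (full_set mul).
Local Notation gen := (gen_subsemigroup mul).

Definition leR x y := exists v, x = mul y v.
Definition leL x y := exists u, x = mul u y.

Lemma leR_refl x : leR x x. Proof. by exists (e x). Qed.
Lemma leL_refl x : leL x x. Proof. by exists (e x). Qed.
Lemma leR_trans x y z : leR x y -> leR y z -> leR x z.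
Proof. by move=> [v ->] [w ->]; exists (mul w v); rewrite mulA. Qed.
Lemma leL_trans x y z : leL x y -> leL y z -> leL x z.
Proof. by move=> [v ->] [w ->]; exists (mul v w); rewrite mulA. Qed.
Lemma leJ_refl x : leJ x x. Proof. by exists (e x), (e x); rewrite he1 he2. Qed.
Lemma leJ_trans x y z : leJ x y -> leJ y z -> leJ x z.
Proof.
move=> [u [v ->]] [u' [v' ->]]; exists (mul u u'), (mul v' v).
by rewrite !mulA.
Qed.
Lemma leJ_mulr x y z : leJ x y -> leJ (mul x z) y.
Proof. by move=> [u [v ->]]; exists u, (mul v z); rewrite !mulA. Qed.
Lemma leJ_mull x y z : leJ x y -> leJ (mul z x) y.
Proof. by move=> [u [v ->]]; exists (mul z u), v; rewrite !mulA. Qed.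

Lemma semiprime y z : leJ (mul y y) z -> leJ y z.
Proof.
move=> [u [v h]]; exists u, (mul v (inv y)).
have E : y = mul (mul y y) (inv y) by rewrite -mulA hi1 he1.
by rewrite {1}E h !mulA.
Qed.

Lemma meetJ x a b : leJ x a -> leJ x b -> leJ x (mul a b).
Proof.
move=> [u [v ha]] [u' [v' hb]].
have ba : leJ (mul b a) (mul a b).
  by apply: semiprime; exists b, a; rewrite !mulA.
have awb w : leJ (mul a (mul w b)) (mul a b).
  apply: semiprime; move: ba => [p [q hba]].
  exists (mul a (mul w p)), (mul q (mul w b)).
  have -> : mul (mul a (mul w b)) (mul a (mul w b)) =
     mul (mul a w) (mul (mul b a) (mul w b)) by rewrite !mulA.
  by rewrite hba !mulA.
apply: semiprime.
have : leJ (mul x x) (mul a (mul (mul v u') b)).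
  by exists u, v'; rewrite {1}ha {1}hb !mulA.
by move=> h; apply: leJ_trans h (awb _).
Qed.

Lemma L1 x u z : x = mul u (mul x z) -> x = mul x (mul z (inv z)).
Proof.
by move=> h; rewrite hi1 {2}h -!mulA he1 -h.
Qed.


Lemma L1' x u z : x = mul (mul z x) u -> x = mul (mul (inv z) z) x.
Proof. by move=> h; rewrite hi2 {2}h !mulA he2 -h. Qed.

Lemma full_le C q t : full C q -> gen C t -> leJ q t.
Proof.
move=> fq; elim => [c Cc|x y _ hx _ hy]; first exact: fq.
exact: meetJ.
Qed.

Lemma gen_split C d t : gen C t -> gen (C `\ d) t \/ leJ t d.
Proof.
elim => [c Cc|x y _ [hx|hx] _ [hy|hy]].
- have [->|ncd] := pselect (c = d); first by right; exact: leJ_refl.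
  by left; apply: gen_base; split.
- by left; exact: gen_mul.
- by right; exact: leJ_mull.
- by right; exact: leJ_mulr.
- by right; exact: leJ_mulr.
Qed.

Definition Hcl t := [set y | [/\ leR y t, leL y t, leR t y & leL t y]].

Lemma fsetD1_set (X : {fset S}) d : [set` (X `\ d)%fset] = [set` X] `\ d.
Proof.
apply/seteqP; split => y /=; rewrite in_fsetD1.
  by case/andP => /eqP ? ?.
by case => ? /eqP ->.
Qed.

Lemma leR_full C q t : full C q -> gen C t -> (t = q \/ exists v, t = mul q v) ->
  leR t q /\ leR q t.
Proof.
move=> fq gt [->|[v tE]]; first by split; exact: leR_refl.
split; first by exists v.
have [u [w qE]] := full_le fq gt.
rewrite tE in qE.
have qE' : q = mul u (mul q (mul v w)) by rewrite {1}qE !mulA.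
rewrite {1}(L1 qE').
by exists (mul w (inv (mul v w))); rewrite tE !mulA.
Qed.

Lemma leL_full C q t : full C q -> gen C t -> (t = q \/ exists v, t = mul v q) ->
  leL t q /\ leL q t.
Proof.
move=> fq gt [->|[v tE]]; first by split; exact: leL_refl.
split; first by exists v.
have [u [w qE]] := full_le fq gt.
rewrite tE in qE.
have qE' : q = mul (mul (mul u v) q) w by rewrite {1}qE !mulA.
rewrite {1}(L1' qE').
by exists (mul (inv (mul u v)) u); rewrite tE !mulA.
Qed.

Lemma gen_finite (Hfin : forall t, finite_set (Hcl t)) :
  forall n (X : {fset S}), #|` X| = n -> finite_set (gen [set` X]).
Proof.
move=> n; elim/ltn_ind: n => n IH X hX.
set C := [set` X].
set U := \bigcup_(d in C) gen (C `\ d).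
have finU : finite_set U.
  apply: bigcup_finite; first exact: finite_fset.
  move=> d Cd; rewrite -fsetD1_set; apply: (IH #|` (X `\ d)%fset|) => //.
  by rewrite -hX (cardfsD1 d X) Cd.
have hU : forall x, gen C x -> full C x \/ U x.
  move=> x gx; have [f|nf] := pselect (full C x); first by left.
  right; move/existsPNP: nf => [d Cd nle].
  have [g|//] := gen_split d gx.
  by exists d.
set Q := C `|` [set mul p.1 p.2 | p in U `*` C].
set Q' := C `|` [set mul p.2 p.1 | p in U `*` C].
have finC : finite_set C by exact: finite_fset.
have finQ : finite_set Q.
  by rewrite /Q finite_setU; split => //; apply: finite_image; apply: finite_setX.
have finQ' : finite_set Q'.
  by rewrite /Q' finite_setU; split => //; apply: finite_image; apply: finite_setX.
set W := gen C `\` U.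
have hq : forall t, exists q, W t -> [/\ full C q, Q q & (t = q \/ exists v, t = mul q v)].
  move=> t; have [[gt nUt]|] := pselect (W t); last by move=> nW; exists t => /nW.
  case: (dec mulA hU gt) => // -[q [fq Qq tq]]; exists q => _; split => //.
  case: Qq => [?|[u Uu [c Cc ->]]]; first by left.
  by right; exists (u, c).
have hr : forall t, exists r, W t -> [/\ full C r, Q' r & (t = r \/ exists v, t = mul v r)].
  move=> t; have [[gt nUt]|] := pselect (W t); last by move=> nW; exists t => /nW.
  have mulA' : associative (fun x y => mul y x) by move=> a b c; rewrite mulA.
  have hU' : forall x, gen_subsemigroup (fun x y => mul y x) C x ->
      full_set (fun x y => mul y x) C x \/ U x.
    by move=> x; rewrite gen_op full_op //; exact: hU.
  have gt' : gen_subsemigroup (fun x y => mul y x) C t by rewrite gen_op.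
  case: (dec mulA' hU' gt') => // -[r [fr Qr tr]]; exists r => _; split => //.
  - by move: fr; rewrite full_op.
  - case: Qr => [?|[u Uu [c Cc ->]]]; first by left.
    by right; exists (u, c).
have [qf Hqf] := choice hq.
have [rf Hrf] := choice hr.
have finW : finite_set W.
  have -> : W = \bigcup_(p in Q `*` Q') [set t | W t /\ (qf t, rf t) = p].
    apply/seteqP; split => [t Wt|t [p _ [Wt _]] //].
    have [_ Qt _] := Hqf t Wt; have [_ Qt' _] := Hrf t Wt.
    by exists (qf t, rf t).
  apply: bigcup_finite; first exact: finite_setX.
  move=> p _.
  have [[t0 [Wt0 E0]]|ne] := pselect (exists t0, W t0 /\ (qf t0, rf t0) = p); last first.
    suff -> : [set t | W t /\ (qf t, rf t) = p] = set0 by exact: finite_set0.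
    by apply/seteqP; split => t // ht; apply: ne; exists t.
  apply: sub_finite_set (Hfin t0) => t [Wt Et].
  rewrite -E0 in Et; case: Et => Eq Er.
  have [fq0 _ tq0] := Hqf t0 Wt0; have [fr0 _ tr0] := Hrf t0 Wt0.
  have [fq _ tq] := Hqf t Wt; have [fr _ tr] := Hrf t Wt.
  have [a1 a2] := leR_full fq Wt.1 tq.
  have [b1 b2] := leR_full fq0 Wt0.1 tq0.
  have [c1 c2] := leL_full fr Wt.1 tr.
  have [d1 d2] := leL_full fr0 Wt0.1 tr0.
  rewrite Eq in a1 a2; rewrite Er in c1 c2.
  split.
  - exact: leR_trans a1 b2.
  - exact: leL_trans c1 d2.
  - exact: leR_trans b1 a2.
  - exact: leL_trans d1 c2.
have : gen C `<=` U `|` W.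
  by move=> t gt; have [Ut|nUt] := pselect (U t); [left|right].
move/sub_finite_set; apply; rewrite finite_setU; split => //.
Qed.

End CR.



Set Implicit Arguments. Unset Strict Implicit. Unset Printing Implicit Defensive.

Section Topo.
Variables (S : topologicalType) (mul : S -> S -> S).
Hypothesis mulA : associative mul.
Hypothesis hc : continuous (fun p : S * S => mul p.1 p.2).
Hypothesis hcpt : compact [set: S].
Hypothesis hT : hausdorff_space S.
Hypothesis hrf : residually_finite mul.
Hypothesis hcount : countable [set: S].
Variables (e inv : S -> S).
Hypothesis he1 : forall x, mul x (e x) = x.
Hypothesis he2 : forall x, mul (e x) x = x.
Hypothesis hi1 : forall x, mul x (inv x) = e x.
Hypothesis hi2 : forall x, mul (inv x) x = e x.
Local Notation leR := (leR mul).
Local Notation leL := (leL mul).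
Local Notation Hcl := (Hcl mul).

Lemma Rtr x y z : leR x y -> leR y z -> leR x z.
Proof. exact: (leR_trans mulA). Qed.
Lemma Ltr x y z : leL x y -> leL y z -> leL x z.
Proof. exact: (leL_trans mulA). Qed.
Lemma Rrefl x : leR x x. Proof. exact: (leR_refl he1). Qed.
Lemma Lrefl x : leL x x. Proof. exact: (leL_refl he2). Qed.

Lemma cont_l t : continuous (mul t).
Proof.
move=> z.
have h : continuous (fun z : S => (t, z)).
  by move=> w; apply: cvg_pair; [exact: cvg_cst|exact: cvg_id].
exact: (continuous_comp (h z) (@hc (t, z))).
Qed.

Lemma cont_r t : continuous (fun z => mul z t).
Proof.
move=> z.
have h : continuous (fun z : S => (z, t)).
  by move=> w; apply: cvg_pair; [exact: cvg_id|exact: cvg_cst].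
exact: (continuous_comp (h z) (@hc (z, t))).
Qed.

Lemma cont_fst : continuous (@fst S S).
Proof. by move=> p; exact: cvg_fst. Qed.
Lemma cont_snd : continuous (@snd S S).
Proof. by move=> p; exact: cvg_snd. Qed.

Lemma closed_img (f : S -> S) : continuous f -> closed (f @` setT).
Proof.
move=> cf; apply: compact_closed => //; apply: continuous_compact => //.
exact: continuous_subspaceT.
Qed.

Lemma closed_pre (g : S * S -> S) (t : S) : continuous g ->
  closed [set p : S * S | g p = t].
Proof.
move=> cg.
have -> : [set p : S * S | g p = t] = g @^-1` [set t] by [].
apply: preimage_closed; first by move=> x _; exact: cg.
exact: accessible_closed_set1 (hausdorff_accessible hT) t.
Qed.

Lemma compact_S2 (A : set (S * S)) : closed A -> compact A.
Proof.
move=> cA; apply: (subclosed_compact cA (compact_setX hcpt hcpt)).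
by move=> ? _; split.
Qed.

Lemma closed_leR1 t : closed [set y | leR y t].
Proof.
have -> : [set y | leR y t] = mul t @` setT.
  by apply/seteqP; split => y; [case=> v ->; exists v|case=> v _ <-; exists v].
exact/closed_img/cont_l.
Qed.

Lemma closed_leL1 t : closed [set y | leL y t].
Proof.
have -> : [set y | leL y t] = (fun z => mul z t) @` setT.
  by apply/seteqP; split => y; [case=> v ->; exists v|case=> v _ <-; exists v].
exact/closed_img/cont_r.
Qed.

Lemma closed_leR2 t : closed [set y | leR t y].
Proof.
have -> : [set y | leR t y] = fst @` [set p : S * S | mul p.1 p.2 = t].
  apply/seteqP; split => y; first by case=> v ->; exists (y, v).
  by case=> -[a b] /= <- <-; exists b.
apply: compact_closed => //; apply: continuous_compact.
  exact/continuous_subspaceT/cont_fst.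
by apply: compact_S2; apply: (@closed_pre (fun p : S * S => mul p.1 p.2) t); exact: hc.
Qed.

Lemma closed_leL2 t : closed [set y | leL t y].
Proof.
have -> : [set y | leL t y] = snd @` [set p : S * S | mul p.1 p.2 = t].
  apply/seteqP; split => y; first by case=> v ->; exists (v, y).
  by case=> -[a b] /= <- <-; exists a.
apply: compact_closed => //; apply: continuous_compact.
  exact/continuous_subspaceT/cont_snd.
by apply: compact_S2; apply: (@closed_pre (fun p : S * S => mul p.1 p.2) t); exact: hc.
Qed.

Lemma closed_Hcl t : closed (Hcl t).
Proof.
have -> : Hcl t = [set y | leR y t] `&` [set y | leL y t] `&`
   [set y | leR t y] `&` [set y | leL t y].
  by apply/seteqP; split => y; [case=> *|case=> -[[? ?] ?] ?].
apply: closedI; last exact: closed_leL2.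
apply: closedI; last exact: closed_leR2.
apply: closedI; [exact: closed_leR1|exact: closed_leL1].
Qed.

Lemma separate p q : p <> q ->
  exists U : set S, [/\ open U, closed U, U p & ~ U q].
Proof.
move=> npq; have [F [op [phi [_ _ hop _ hne]]]] := hrf npq.
exists (phi @^-1` [set phi p]); split => //.
- have -> : phi @^-1` [set phi p] =
      ~` \bigcup_(s in [set s | s <> phi p]) phi @^-1` [set s].
    apply/seteqP; split => y /=.
      by move=> E [s /= ns sy]; apply: ns; rewrite -sy E.
    move=> h; apply: contrapT => ny; apply: h; exists (phi y) => //.
  by rewrite closedC; apply: bigcup_open => s _; exact: hop.
- by move=> /= E; apply: hne; rewrite E.
Qed.


Lemma baire (X : set S) : closed X -> X !=set0 ->
  exists2 x0, X x0 & exists O, [/\ open O, O x0 & forall z, X z -> O z -> z = x0].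
Proof.
move=> cX [x0 Xx0].
apply: contrapT => hno.
have hno' : forall x, X x -> forall O, open O -> O x ->
    exists z, [/\ X z, O z & z <> x].
  move=> x Xx O oO Ox; apply: contrapT => nz; apply: hno; exists x => //.
  exists O; split => // z Xz Oz.
  by apply: contrapT => nzx; apply: nz; exists z.
have [h hinj] := countable_injP _ hcount.
pose cl K := [/\ open K, closed K & K `&` X !=set0].
have step : forall Kc : set S * S, exists K' : set S,
    cl Kc.1 -> [/\ cl K', K' `<=` Kc.1 & ~ K' Kc.2].
  case=> K c /=.
  have [clK|ncl] := pselect (cl K); last by exists K => /ncl.
  case: (clK) => oK cK [d [Kd Xd]].
  have [p [Kp Xp npc]] : exists p, [/\ K p, X p & p <> c].
    have [dc|ndc] := pselect (d = c); last by exists d.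
    rewrite dc in Kd Xd.
    have [z [Xz Kz nz]] := hno' c Xd K oK Kd.
    by exists z.
  have [U [oU cU Up nUq]] := separate npc.
  exists (K `&` U) => _; split.
  - split; [exact: openI|exact: closedI|by exists p].
  - by move=> ? [].
  - by case.
have [F HF] := choice step.
have hcn : forall n, exists c, (exists c', h c' = n) -> h c = n.
  move=> n; have [[c' hc']|nc] := pselect (exists c', h c' = n).
    by exists c'.
  by exists x0 => /nc.
have [cn Hcn] := choice hcn.
pose K := fix K n := if n is m.+1 then F (K m, cn m) else setT.
have clK : forall n, cl (K n).
  elim => [|n IH] /=; first by split; [exact: openT|exact: closedT|exists x0].
  by have [] := HF (K n, cn n) IH.
have decK : forall n m, (n <= m)%N -> K m `<=` K n.
  move=> n; elim => [|m IH]; first by rewrite leqn0 => /eqP ->.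
  rewrite leq_eqVlt => /orP [/eqP -> //|].
  rewrite ltnS => /IH Km y /= Ky; apply: Km.
  by have [_ sub _] := HF (K m, cn m) (clK m); apply: sub.
have cptX : @compact (pt_of S x0) X.
  by apply: (subclosed_compact cX hcpt).
rewrite compact_In0 in cptX.
have [y Hy] : \bigcap_(i in [set: nat]) (X `&` K i) !=set0.
  apply: cptX.
    by exists K => // i _; case: (clK i).
  move=> D' _.
  have [y [Ky Xy]] : K (\sum_(i <- D') i)%N `&` X !=set0 by case: (clK (\sum_(i <- D') i)%N).
  exists y => i /= iD'; split => //; apply: (decK i _ _ y Ky).
  by rewrite (big_rem i) //= leq_addr.
have hy : h (cn (h y)) = h y by apply: Hcn; exists y.
have cy : cn (h y) = y by apply: hinj => //; rewrite in_setT.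
have [_ _ nK] := HF (K (h y), cn (h y)) (clK (h y)).
have [_ Ky] := Hy (h y).+1 I.
by rewrite {2}cy in nK; apply: nK.
Qed.

Lemma eL x y : leL x y -> mul x (e y) = x.
Proof. by move=> [u ->]; rewrite -mulA he1. Qed.
Lemma eR x y : leR x y -> mul (e y) x = x.
Proof. by move=> [v ->]; rewrite mulA he2. Qed.

Lemma Hcl_rel t a b : Hcl t a -> Hcl t b -> leR a b /\ leL a b.
Proof.
move=> [a1 a2 a3 a4] [b1 b2 b3 b4]; split.
  exact: Rtr a1 b3.
exact: Ltr a2 b4.
Qed.

Lemma transl t y0 y z : Hcl t y0 -> Hcl t y -> Hcl t z ->
  [/\ mul (mul y0 (inv y)) y = y0, Hcl t (mul (mul y0 (inv y)) z) &
      (mul (mul y0 (inv y)) z = y0 -> z = y)].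
Proof.
move=> H0 Hy Hz.
have [r0y l0y] := Hcl_rel H0 Hy; have [ry0 ly0] := Hcl_rel Hy H0.
have [rzy lzy] := Hcl_rel Hz Hy; have [ryz lyz] := Hcl_rel Hy Hz.
have [r0t l0t rt0 lt0] := H0; have [rzt lzt rtz ltz] := Hz.
split.
- by rewrite -mulA hi2 (eL l0y).
- split.
  + apply: Rtr _ r0t; exists (mul (inv y) z); by rewrite mulA.
  + apply: Ltr _ lzt; by exists (mul y0 (inv y)).
  + apply: Rtr rt0 _; exists (mul (inv z) y).
    rewrite -!mulA (mulA z) hi1 (eR ryz).
    by rewrite hi2 (eL l0y).
  + apply: Ltr ltz _; exists (mul y (inv y0)).
    rewrite !mulA -(mulA y) hi2 (eL ly0) hi1.
    by rewrite (eR rzy).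
- move=> E.
  rewrite -(eL ly0) -hi2 -{2}E.
  rewrite !mulA -(mulA y (inv y0)) hi2 (eL ly0) hi1.
  by rewrite (eR rzy).
Qed.

Lemma Hcl_finite t : finite_set (Hcl t).
Proof.
have cH : closed (Hcl t) by apply: closed_Hcl.
have Ht : Hcl t t by split; [exact: Rrefl|exact: Lrefl|exact: Rrefl|exact: Lrefl].
have [y0 Hy0 hO] := baire cH (ex_intro _ t Ht).
case: hO => O0 [oO Oy0 iso].
have iso_all : forall y, exists O' : set S, Hcl t y ->
    [/\ open O', O' y & forall z, Hcl t z -> O' z -> z = y].
  move=> y; exists (mul (mul y0 (inv y)) @^-1` O0) => Hy.
  split.
  - by apply: open_comp => // x _; exact: cont_l.
  - by have [E _ _] := transl Hy0 Hy Hy; rewrite /preimage /= E.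
  - move=> z Hz Oz; have [_ Hf inj] := transl Hy0 Hy Hz.
    by apply: inj; apply: iso.
have [Of HOf] := choice iso_all.
have cptH : @compact (pt_of S t) (Hcl t) by apply: (subclosed_compact cH hcpt).
rewrite compact_cover in cptH.
have [D' sub cov] : finite_subset_cover (Hcl t) Of (Hcl t).
  apply: cptH; first by move=> i Hi; have [] := HOf i Hi.
  by move=> z Hz; exists z => //; have [] := HOf z Hz.
apply: sub_finite_set (finite_fset D') => z Hz.
have [i iD' Oiz] := cov z Hz.
have Hi : Hcl t i by move: (sub i iD'); rewrite inE.
have [_ _ eq] := HOf i Hi.
by rewrite /= (eq z Hz Oiz).
Qed.

End Topo.


Unset Implicit Arguments.
Set Strict Implicit.

Theorem corollary3p11 (S : topologicalType) (mul : S -> S -> S) :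
  profinite_semigroup mul ->
  finitely_generated mul ->
  countable [set: S] ->
  completely_regular mul ->
  finite_set [set: S].
Proof.
move=> [[mulA hc hcpt hT] hrf] [A [finA clA]] hcount hCR.
have hd : forall x, exists p : S * S,
    [/\ mul x p.1 = x, mul p.1 x = x, mul x p.2 = p.1 & mul p.2 x = p.1].
  move=> x; have [G [[_ [e0 [Ge0 hid hinv]]] Gx]] := hCR x.
  have [h [_ xh hx]] := hinv x Gx.
  have [ex xe] := hid x Gx.
  by exists (e0, h).
have [f Hf] := choice hd.
pose e x := (f x).1; pose inv x := (f x).2.
have he1 : forall x, mul x (e x) = x by move=> x; case: (Hf x).
have he2 : forall x, mul (e x) x = x by move=> x; case: (Hf x).
have hi1 : forall x, mul x (inv x) = e x by move=> x; case: (Hf x).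
have hi2 : forall x, mul (inv x) x = e x by move=> x; case: (Hf x).
have [X AX] := finite_fsetP.1 finA.
have Hfin : forall t, finite_set (Hcl mul t).
  move=> t; exact: (Hcl_finite mulA hc hcpt hT hrf hcount he1 he2 hi1 hi2).
have fin := gen_finite mulA he1 he2 hi1 hi2 Hfin (erefl #|` X|).
rewrite -AX in fin.
have cg : closed (gen_subsemigroup mul A).
  exact: compact_closed hT (finite_compact fin).
by rewrite -clA -(proj1 (closure_id _) cg).
Qed.
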